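(* Consider Model 3 (the risk-seeking insider model) with $N\ge1$ trading periods, as described in the context. A subgame perfect linear equilibrium exists. In this equilibrium there are real numbers $\beta_n,\lambda_n,\alpha_n,\delta_n,\Sigma_n$ such that for $n=1,\dots,N$: $x_n=\beta_n(v-p_{n-1})$, $p_n-p_{n-1}=\lambda_n y_n$, $\Sigma_n=\operatorname{Var}(v\mid y_1,\dots,y_n)$, and $$E\Big(\sum_{k=n}^N\pi_k\,\Big|\,p_1,\dots,p_{n-1},v\Big)=\alpha_{n-1}(v-p_{n-1})^2+\delta_{n-1},$$ where $$\delta_n=a_n\sigma_u\Delta t_N^{1/2}\Sigma_n^{1/2},\quad \alpha_n=b_n\sigma_u\Delta t_N^{1/2}\Sigma_n^{-1/2}\quad(n=0,\dots,N-1),\qquad \beta_n=c_n\sigma_u\Delta t_N^{1/2}\Sigma_{n-1}^{-1/2}\quad(n=1,\dots,N),$$ and the sequences $\{a_n\},\{b_n\},\{c_n\}$, with terminal values $a_{N-1}=0$, $b_{N-1}=\tfrac12$, $c_N=1$, satisfy for $n=1,\dots,N-1$ $$a_{n-1}=a_n\Big(\frac{1}{c_n^2+1}\Big)^{1/2}+b_n\Big(\frac{1}{c_n^2+1}\Big)^{3/2}c_n^2,\qquad b_{n-1}=b_n\Big(\frac{1}{c_n^2+1}\Big)^{3/2}+\frac{c_n}{c_n^2+1},\qquad -3b_nc_n+(c_n^2+1)^{1/2}(1-c_n^2)=0,$$ with $c_n>0$ for $n=1,\dots,N$.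
   Context: Model. Fix an integer $N\ge1$ and put $\Delta t_N=1/N$. A risky asset has liquidation value $v\sim N(p_0,\Sigma_0)$ with $\Sigma_0>0$. In each period $n=1,\dots,N$ noise traders submit $u_n\sim N(0,\sigma_u^2\Delta t_N)$ ($\sigma_u>0$), i.i.d. and independent of $v$. The insider knows $v$ and submits $x_n=\beta_n(v-p_{n-1})$ with $\beta_n\in\mathbb R$. The market maker observes $y_n=x_n+u_n$ and sets $p_n=E[v\mid y_1,\dots,y_n]$. The insider's profit in period $n$ is $\pi_n=x_n(v-p_n)$ and $\Sigma_n=\operatorname{Var}(v\mid y_1,\dots,y_n)$. For such strategies, with $\lambda_n=\beta_n\Sigma_{n-1}/(\beta_n^2\Sigma_{n-1}+\sigma_u^2\Delta t_N)$ one has $p_n-p_{n-1}=\lambda_ny_n$, $\Sigma_n=\Sigma_{n-1}\sigma_u^2\Delta t_N/(\beta_n^2\Sigma_{n-1}+\sigma_u^2\Delta t_N)$, and $E(\sum_{k=n}^N\pi_k\mid p_1,\dots,p_{n-1},v)=\alpha_{n-1}(v-p_{n-1})^2+\delta_{n-1}$ with $\alpha_N=\delta_N=0$, $\alpha_{n-1}=\alpha_n(1-\lambda_n\beta_n)^2+\beta_n(1-\lambda_n\beta_n)$, $\delta_{n-1}=\delta_n+\alpha_n\lambda_n^2\sigma_u^2\Delta t_N$. Here $\alpha_{n-1}(v-p_{n-1})^2$ is the ''risky profit'' and $\delta_{n-1}$ the ''guaranteed profit''. Equilibrium. An insider strategy specifies, for each period $n$ and each value $\Sigma_{n-1}>0$,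 an intensity $\beta_n$. Given the strategy for periods $n+1,\dots,N$, each choice of $\beta_n$ determines (with later intensities given by the strategy applied to the resulting variances) $\alpha_{n-1},\delta_{n-1}$ as functions of $\beta_n$ and $\Sigma_{n-1}$. A subgame perfect linear equilibrium of Model 3 is a strategy such that for every $n$ and every $\Sigma_{n-1}>0$ the prescribed $\beta_n$ first maximizes the risky profit $\alpha_{n-1}(v-p_{n-1})^2$ (i.e. maximizes $\alpha_{n-1}$) over $\beta_n\in\mathbb R$, and among those maximizers maximizes the guaranteed profit $\delta_{n-1}$, with the market maker pricing efficiently given this strategy. *)

(* Defs.v *)
From Stdlib Require Import Reals Lra Lia.
Open Scope R_scope.

Definition dt (N : nat) : R := / INR N.

Definition lam (su : R) (N : nat) (b Sig : R) : R :=
  b * Sig / (b ^ 2 * Sig + su ^ 2 * dt N).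

Definition sig_next (su : R) (N : nat) (b Sig : R) : R :=
  Sig * su ^ 2 * dt N / (b ^ 2 * Sig + su ^ 2 * dt N).

(* Given the continuation
   value [cont : Sigma_n -> (alpha_n, delta_n)], the intensity
   beta_n = b and Sigma_{n-1} = Sig, returns (alpha_{n-1}, delta_{n-1}):
   alpha_{n-1} = alpha_n (1 - lambda_n beta_n)^2 + beta_n (1 - lambda_n beta_n),
   delta_{n-1} = delta_n + alpha_n lambda_n^2 sigma_u^2 Dt. *)
Definition onestep (su : R) (N : nat) (cont : R -> R * R) (b Sig : R) : R * R :=
  let Sig' := sig_next su N b Sig in
  let l := lam su N b Sig in
  let an := fst (cont Sig') in
  let dn := snd (cont Sig') in
  (an * (1 - l * b) ^ 2 + b * (1 - l * b),
   dn + an * l ^ 2 * su ^ 2 * dt N).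

(* An insider strategy: [s n Sig] is the intensity beta_n prescribed in
   period n (1 <= n <= N) when Sigma_{n-1} = Sig.
   [value su N s m Sig] = (alpha_{N-m}, delta_{N-m}) as functions of
   Sigma_{N-m} = Sig, when periods N-m+1, ..., N follow the strategy s. *)
Fixpoint value (su : R) (N : nat) (s : nat -> R -> R) (m : nat) (Sig : R)
  : R * R :=
  match m with
  | O => (0, 0)
  | S m' => onestep su N (value su N s m') (s (N - m')%nat Sig) Sig
  end.

Definition lex_max (A D : R -> R) (b : R) : Prop :=
  (forall b', A b' <= A b) /\ (forall b', A b' = A b -> D b' <= D b).

Definition model3_equilibrium (su : R) (N : nat) (s : nat -> R -> R) : Prop :=
  forall n : nat, (1 <= n <= N)%nat ->
  forall Sig : R, 0 < Sig ->
    lex_max (fun b => fst (onestep su N (value su N s (N - n)) b Sig))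
            (fun b => snd (onestep su N (value su N s (N - n)) b Sig))
            (s n Sig).

(* Main.v *)
Require Import Defs.
From Stdlib Require Import Reals.
Open Scope R_scope.
From Stdlib Require Import Lia.
From Stdlib Require Import Reals Lra ClassicalEpsilon.
From Coquelicot Require Import Coquelicot.
Open Scope R_scope.
Definition G (B c : R) := - 3 * B * c + sqrt (c ^ 2 + 1) * (1 - c ^ 2).
Definition F (B c : R) := B * sqrt (c^2+1) / (c^2+1)^2 + c/(c^2+1).
Definition dF (B c : R) := G B c / (sqrt (c^2+1) * (c^2+1)^2).
Lemma F_deriv B c : is_derive (F B) c (dF B c).
Proof.
unfold F, dF, G.
auto_derive.
- nra.
- assert (H1: 0 < c^2+1) by nra.
  assert (Hs := sqrt_lt_R0 _ H1).
  assert (Hss := sqrt_sqrt _ (Rlt_le _ _ H1)).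
  set (s := sqrt (c^2+1)) in *.
  replace (c * (c * 1) + 1) with (s*s) by (rewrite Hss; ring).
  rewrite sqrt_square by lra.
  rewrite <- Hss.
  field_simplify; try lra.
  replace (c^2) with (s*s-1) by lra. field; lra.
Qed.

Lemma cont_of_derive (f df : R -> R) (x : R) : (forall y, is_derive f y (df y)) -> continuity_pt f x.
Proof.
intros H. apply derivable_continuous_pt. exists (df x). apply is_derive_Reals, H.
Qed.

Lemma mvt (f df : R -> R) p q : p <= q -> (forall x, is_derive f x (df x)) ->
  exists x, p <= x <= q /\ f q - f p = df x * (q - p).
Proof.
intros Hpq Hd.
destruct (MVT_gen f p q df) as [x [Hx Heq]].
- intros; apply Hd.
- intros; apply (cont_of_derive f df); auto.
- rewrite Rmin_left in Hx by lra. rewrite Rmax_right in Hx by lra.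
  exists x; auto.
Qed.

Lemma mono_le (f df : R -> R) p q : p <= q -> (forall x, is_derive f x (df x)) ->
  (forall x, p <= x <= q -> 0 <= df x) -> f p <= f q.
Proof. intros H1 H2 H3. destruct (mvt f df p q H1 H2) as [x [Hx E]].
specialize (H3 x Hx). nra. Qed.
Lemma mono_lt (f df : R -> R) p q : p < q -> (forall x, is_derive f x (df x)) ->
  (forall x, p <= x <= q -> 0 < df x) -> f p < f q.
Proof. intros H1 H2 H3. destruct (mvt f df p q (Rlt_le _ _ H1) H2) as [x [Hx E]].
specialize (H3 x Hx). nra. Qed.
Lemma anti_le (f df : R -> R) p q : p <= q -> (forall x, is_derive f x (df x)) ->
  (forall x, p <= x <= q -> df x <= 0) -> f q <= f p.
Proof. intros H1 H2 H3. destruct (mvt f df p q H1 H2) as [x [Hx E]].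
specialize (H3 x Hx). nra. Qed.
Lemma anti_lt (f df : R -> R) p q : p < q -> (forall x, is_derive f x (df x)) ->
  (forall x, p <= x <= q -> df x < 0) -> f q < f p.
Proof. intros H1 H2 H3. destruct (mvt f df p q (Rlt_le _ _ H1) H2) as [x [Hx E]].
specialize (H3 x Hx). nra. Qed.

Lemma sfacts c : 0 < sqrt (c^2+1) /\ sqrt (c^2+1) * sqrt (c^2+1) = c^2+1.
Proof.
assert (H1: 0 < c^2+1) by nra. split. apply sqrt_lt_R0; auto. apply sqrt_sqrt; lra.
Qed.

Lemma root_le1 B c0 : 0 <= B -> 0 < c0 -> G B c0 = 0 -> c0 <= 1.
Proof.
intros HB Hc HG. unfold G in HG. destruct (sfacts c0) as [Hs Hss].
destruct (Rle_lt_dec c0 1) as [h|h]; auto.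
exfalso. assert (1 - c0^2 < 0) by nra. nra.
Qed.

Lemma G_pos B c0 c : 0 <= B -> 0 < c0 -> G B c0 = 0 -> 0 <= c < c0 -> 0 < G B c.
Proof.
intros HB Hc0 HG Hc. assert (Hle := root_le1 B c0 HB Hc0 HG).
unfold G in *. destruct (sfacts c0) as [Hs0 Hss0]. destruct (sfacts c) as [Hs Hss].
set (s0 := sqrt (c0^2+1)) in *. set (s := sqrt (c^2+1)) in *.
assert (E0 : s0 * (1 - c0^2) = 3*B*c0) by lra.
assert (E0' : (c0^2+1)*(1-c0^2)^2 = 9*B^2*c0^2).
{ rewrite <- Hss0. replace (9*B^2*c0^2) with ((3*B*c0)*(3*B*c0)) by ring. rewrite <- E0. ring. }
set (u := c^2) in *. set (v := c0^2) in *.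
assert (Hu : 0 <= u) by (unfold u; nra). assert (Huv : u < v) by (unfold u, v; nra).
assert (Hv : v <= 1) by (unfold v; nra).
assert (Hbr : 0 < 1 + u + v - u^2 - u*v - v^2 + 9*B^2) by nra.
assert (P : (u+1)*(1-u)^2 - 9*B^2*u > 0).
{ replace ((u+1)*(1-u)^2 - 9*B^2*u) with
   ((u+1)*(1-u)^2 - 9*B^2*u - ((v+1)*(1-v)^2 - 9*B^2*v)) by (rewrite E0'; unfold v; ring).
  replace ((u+1)*(1-u)^2 - 9*B^2*u - ((v+1)*(1-v)^2 - 9*B^2*v)) with
    ((v-u)*(1 + u + v - u^2 - u*v - v^2 + 9*B^2)) by ring. nra. }
assert (X : 0 <= s * (1-u)) by nra.
assert (Y : 0 <= 3*B*c) by nra.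
assert (XX : (s*(1-u))*(s*(1-u)) > (3*B*c)*(3*B*c)).
{ replace ((s*(1-u))*(s*(1-u))) with ((s*s)*(1-u)^2) by ring. rewrite Hss. fold u.
  replace ((3*B*c)*(3*B*c)) with (9*B^2*u) by (unfold u; ring). nra. }
nra.
Qed.

Lemma G_neg B c0 c : 0 <= B -> 0 < c0 -> G B c0 = 0 -> c0 < c -> G B c < 0.
Proof.
intros HB Hc0 HG Hc. assert (Hle := root_le1 B c0 HB Hc0 HG).
unfold G in *. destruct (sfacts c0) as [Hs0 Hss0]. destruct (sfacts c) as [Hs Hss].
set (s0 := sqrt (c0^2+1)) in *. set (s := sqrt (c^2+1)) in *.
destruct (Rle_lt_dec c 1) as [h|h].
2:{ assert (1 - c^2 < 0) by nra. nra. }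
assert (E0 : s0 * (1 - c0^2) = 3*B*c0) by lra.
assert (E0' : (c0^2+1)*(1-c0^2)^2 = 9*B^2*c0^2).
{ rewrite <- Hss0. replace (9*B^2*c0^2) with ((3*B*c0)*(3*B*c0)) by ring. rewrite <- E0. ring. }
set (u := c^2) in *. set (v := c0^2) in *.
assert (Hv0 : 0 <= v) by (unfold v; nra). assert (Huv : v < u) by (unfold u, v; nra).
assert (Hu : u <= 1) by (unfold u; nra).
assert (Hbr : 0 < 1 + u + v - u^2 - u*v - v^2 + 9*B^2) by nra.
assert (P : (u+1)*(1-u)^2 - 9*B^2*u < 0).
{ replace ((u+1)*(1-u)^2 - 9*B^2*u) with
   ((u+1)*(1-u)^2 - 9*B^2*u - ((v+1)*(1-v)^2 - 9*B^2*v)) by (rewrite E0'; unfold v; ring).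
  replace ((u+1)*(1-u)^2 - 9*B^2*u - ((v+1)*(1-v)^2 - 9*B^2*v)) with
    ((v-u)*(1 + u + v - u^2 - u*v - v^2 + 9*B^2)) by ring. nra. }
assert (X : 0 <= s * (1-u)) by nra.
assert (Y : 0 <= 3*B*c) by nra.
assert (XX : (s*(1-u))*(s*(1-u)) < (3*B*c)*(3*B*c)).
{ replace ((s*(1-u))*(s*(1-u))) with ((s*s)*(1-u)^2) by ring. rewrite Hss. fold u.
  replace ((3*B*c)*(3*B*c)) with (9*B^2*u) by (unfold u; ring). nra. }
nra.
Qed.
Lemma dF_pos B c0 x : 0 <= B -> 0 < c0 -> G B c0 = 0 -> 0 <= x < c0 -> 0 < dF B x.
Proof. intros. unfold dF. destruct (sfacts x) as [Hs _].
apply Rdiv_lt_0_compat. apply (G_pos B c0 x); auto. apply Rmult_lt_0_compat; auto. apply pow_lt; nra. Qed.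
Lemma dF_neg B c0 x : 0 <= B -> 0 < c0 -> G B c0 = 0 -> c0 < x -> dF B x < 0.
Proof. intros. unfold dF. destruct (sfacts x) as [Hs _].
assert (G B x < 0) by (apply (G_neg B c0 x); auto).
assert (0 < sqrt (x^2+1) * (x^2+1)^2) by (apply Rmult_lt_0_compat; auto; apply pow_lt; nra).
unfold Rdiv. assert (0 < / (sqrt (x^2+1) * (x^2+1)^2)) by (apply Rinv_0_lt_compat; auto). nra. Qed.

Lemma opt_pos B c0 c : 0 <= B -> 0 < c0 -> G B c0 = 0 -> 0 <= c -> c <> c0 -> F B c < F B c0.
Proof.
intros HB H0 HG Hc Hne.
destruct (Rlt_or_le c c0) as [h|h].
- set (m := (c + c0)/2).
  apply Rlt_le_trans with (F B m).
  + apply (mono_lt (F B) (dF B)). unfold m; lra. apply F_deriv.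
    intros x Hx. apply (dF_pos B c0 x); auto. unfold m in Hx; lra.
  + apply (mono_le (F B) (dF B)). unfold m; lra. apply F_deriv.
    intros x Hx. destruct (Req_dec x c0) as [e|e].
    * subst x. unfold dF. rewrite HG. lra.
    * left. apply (dF_pos B c0 x); auto. unfold m in Hx; lra.
- assert (h' : c0 < c) by lra. set (m := (c + c0)/2).
  apply Rlt_le_trans with (F B m).
  + apply (anti_lt (F B) (dF B)). unfold m; lra. apply F_deriv.
    intros x Hx. apply (dF_neg B c0 x); auto. unfold m in Hx; lra.
  + apply (anti_le (F B) (dF B)). unfold m; lra. apply F_deriv.
    intros x Hx. destruct (Req_dec x c0) as [e|e].
    * subst x. unfold dF. rewrite HG. lra.
    * left. apply (dF_neg B c0 x); auto. unfold m in Hx; lra.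
Qed.

Lemma opt B c0 c : 0 <= B -> 0 < c0 -> G B c0 = 0 -> c <> c0 -> F B c < F B c0.
Proof.
intros HB H0 HG Hne.
destruct (Rle_or_lt 0 c) as [h|h]. apply opt_pos; auto.
apply Rlt_le_trans with (F B (-c)).
- unfold F. replace ((-c)^2) with (c^2) by ring.
  assert (0 < c^2+1) by nra.
  assert (-c/(c^2+1) - c/(c^2+1) > 0).
  { replace (-c/(c^2+1) - c/(c^2+1)) with ((-2*c)*/(c^2+1)) by (field; lra).
    apply Rmult_lt_0_compat. lra. apply Rinv_0_lt_compat; lra. }
  lra.
- destruct (Req_dec (-c) c0) as [e|e]. rewrite e; lra.
  left. apply opt_pos; auto. lra.
Qed.

Lemma G_cont B : continuity (fun c => - G B c).
Proof.
intro x. apply continuity_pt_filterlim.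
apply (@ex_derive_continuous R_AbsRing R_NormedModule (fun c => - G B c) x).
unfold G. auto_derive. nra.
Qed.

Lemma root_ex B : exists c, 0 <= B -> 0 < c /\ G B c = 0.
Proof.
destruct (Rlt_or_le 0 B) as [h|h].
- destruct (IVT (fun c => - G B c) 0 1 (G_cont B)) as [z [Hz Ez]].
  + lra.
  + unfold G. replace (0^2+1) with 1 by ring. rewrite sqrt_1. lra.
  + unfold G. replace (1^2+1) with 2 by ring. nra.
  + exists z. intros _. split.
    * destruct (Req_dec z 0) as [e|e]; [|lra].
      subst z. unfold G in Ez. replace (0^2+1) with 1 in Ez by ring. rewrite sqrt_1 in Ez. lra.
    * lra.
- exists 1. intros h'. split. lra. unfold G. replace B with 0 by lra. ring.
Qed.

Definition root B := proj1_sig (constructive_indefinite_description _ (root_ex B)).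
Lemma root_spec B : 0 <= B -> 0 < root B /\ G B (root B) = 0.
Proof. unfold root. destruct (constructive_indefinite_description _ _) as [c Hc]. simpl. auto. Qed.

Lemma root_uniq B c1 c2 : 0 <= B -> 0 < c1 -> G B c1 = 0 -> 0 < c2 -> G B c2 = 0 -> c1 = c2.
Proof.
intros. destruct (Rtotal_order c1 c2) as [h|[h|h]]; auto.
- assert (0 < G B c1) by (apply (G_pos B c2 c1); auto; lra). lra.
- assert (0 < G B c2) by (apply (G_pos B c1 c2); auto; lra). lra.
Qed.

Lemma root0 : root 0 = 1.
Proof.
destruct (root_spec 0) as [h1 h2]. lra.
apply (root_uniq 0); auto; try lra. unfold G. ring.
Qed.
Lemma Kfacts N su : (1 <= N)%nat -> 0 < su ->
  0 < su * sqrt (dt N) /\ (su * sqrt (dt N)) * (su * sqrt (dt N)) = su^2 * dt N.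
Proof.
intros HN Hsu. assert (Hd : 0 < dt N).
{ unfold dt. apply Rinv_0_lt_compat, lt_0_INR. lia. }
split. apply Rmult_lt_0_compat; auto. apply sqrt_lt_R0; auto.
replace ((su * sqrt (dt N)) * (su * sqrt (dt N))) with (su^2 * (sqrt (dt N) * sqrt (dt N))) by ring.
rewrite sqrt_sqrt; lra.
Qed.

Lemma onestep_form su N cont A B c Sig beta : (1 <= N)%nat -> 0 < su -> 0 < Sig ->
  (forall x, 0 < x -> fst (cont x) = B * (su * sqrt (dt N)) / sqrt x /\
                      snd (cont x) = A * (su * sqrt (dt N)) * sqrt x) ->
  beta = c * (su * sqrt (dt N)) / sqrt Sig ->
  onestep su N cont beta Sig =
  ((su * sqrt (dt N)) / sqrt Sig * F B c,
   (su * sqrt (dt N)) * sqrt Sig * (A / sqrt (c^2+1) + B * c^2 * sqrt (c^2+1) / (c^2+1)^2)).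
Proof.
intros HN Hsu HSig Hcont Hbeta.
destruct (Kfacts N su HN Hsu) as [HK HK2].
destruct (sfacts c) as [Hs Hss].
assert (Hr : 0 < sqrt Sig) by (apply sqrt_lt_R0; auto).
assert (Hrr : sqrt Sig * sqrt Sig = Sig) by (apply sqrt_sqrt; lra).
unfold F.
set (K := su * sqrt (dt N)) in *. set (r := sqrt Sig) in *. set (s := sqrt (c^2+1)) in *.
assert (Hc2 : 0 < c^2+1) by nra.
assert (Hsig : sig_next su N beta Sig = (r/s)*(r/s)).
{ unfold sig_next. rewrite <- HK2, <- Hrr, Hbeta.
  replace ((r/s)*(r/s)) with (r*r/(c^2+1)) by (rewrite <- Hss; field; lra).
  replace (r * r * su ^ 2 * dt N) with (r*r*(K*K)) by (rewrite HK2; ring). field. split; [lra|]. split; [lra|]. nra. }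
assert (Hpos : 0 < r/s) by (apply Rdiv_lt_0_compat; auto).
destruct (Hcont (sig_next su N beta Sig)) as [E1 E2].
{ rewrite Hsig. nra. }
unfold onestep. rewrite E1, E2, Hsig, sqrt_square by lra.
unfold lam. assert (Hd : dt N = K*K/su^2) by (rewrite HK2; field; lra).
rewrite Hd, <- Hrr, Hbeta.
f_equal; field; repeat split; try lra; nra.
Qed.
Fixpoint AB (m : nat) : R * R :=
  match m with
  | O => (0, 0)
  | S m' =>
    let A := fst (AB m') in let B := snd (AB m') in let C := root B in
    (A * sqrt (1 / (C ^ 2 + 1)) + B * (sqrt (1 / (C ^ 2 + 1))) ^ 3 * C ^ 2,
     B * (sqrt (1 / (C ^ 2 + 1))) ^ 3 + C / (C ^ 2 + 1))
  end.
Definition Am m := fst (AB m).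
Definition Bm m := snd (AB m).
Definition Cm m := root (Bm m).

Lemma Bm_nonneg m : 0 <= Bm m.
Proof.
induction m as [|m IH]. unfold Bm; simpl; lra.
unfold Bm; cbn [AB fst snd]. fold (Bm m).
destruct (root_spec _ IH) as [h _].
set (C := root (Bm m)) in *.
assert (0 <= sqrt (1/(C^2+1))^3) by (apply pow_le, sqrt_pos).
assert (0 < C/(C^2+1)) by (apply Rdiv_lt_0_compat; nra).
nra.
Qed.

Lemma inv_sqrt c : sqrt (1 / (c^2+1)) = 1 / sqrt (c^2+1).
Proof. unfold Rdiv. rewrite !Rmult_1_l. apply sqrt_inv. Qed.

Definition strat (N : nat) (su : R) (n : nat) (Sig : R) : R :=
  Cm (N - n) * su * sqrt (dt N) / sqrt Sig.

Lemma value_form N su : (1 <= N)%nat -> 0 < su -> forall m, (m <= N)%nat ->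
  forall Sig, 0 < Sig ->
  fst (value su N (strat N su) m Sig) = Bm m * (su * sqrt (dt N)) / sqrt Sig /\
  snd (value su N (strat N su) m Sig) = Am m * (su * sqrt (dt N)) * sqrt Sig.
Proof.
intros HN Hsu m. induction m as [|m IH]; intros Hm Sig HSig.
- simpl. unfold Am, Bm; simpl. split; unfold Rdiv; ring.
- change (value su N (strat N su) (S m) Sig) with
    (onestep su N (value su N (strat N su) m) (strat N su (N - m) Sig) Sig).
  rewrite (onestep_form su N _ (Am m) (Bm m) (Cm m) Sig); auto.
  + cbn [fst snd]. unfold Am, Bm. cbn [AB fst snd]. fold (Am m) (Bm m). fold (Cm m).
    unfold F. rewrite inv_sqrt. assert (0 < sqrt Sig) by (apply sqrt_lt_R0; auto). destruct (sfacts (Cm m)) as [Hs Hss].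
    set (s := sqrt (Cm m ^2+1)) in *.
    replace (Cm m ^ 2 + 1) with (s*s) by lra.
    split; field; lra.
  + intros x Hx. apply IH; auto. lia.
  + unfold strat. replace (N - (N - m))%nat with m by lia. unfold Rdiv. ring.
Qed.
Theorem theorem5 (N : nat) (su : R) :
  (1 <= N)%nat -> 0 < su ->
  exists (s : nat -> R -> R) (a b c : nat -> R),
    model3_equilibrium su N s /\
    (* terminal values *)
    a (N - 1)%nat = 0 /\ b (N - 1)%nat = 1 / 2 /\ c N = 1 /\
    (* backward recursions, n = 1, ..., N-1 *)
    (forall n : nat, (1 <= n <= N - 1)%nat ->
       a (n - 1)%nat = a n * sqrt (1 / (c n ^ 2 + 1))
                       + b n * (sqrt (1 / (c n ^ 2 + 1))) ^ 3 * c n ^ 2 /\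
       b (n - 1)%nat = b n * (sqrt (1 / (c n ^ 2 + 1))) ^ 3
                       + c n / (c n ^ 2 + 1) /\
       - 3 * b n * c n + sqrt (c n ^ 2 + 1) * (1 - c n ^ 2) = 0) /\
    (* positivity *)
    (forall n : nat, (1 <= n <= N)%nat -> 0 < c n) /\
    (* beta_n = c_n sigma_u Dt^(1/2) Sigma_{n-1}^(-1/2), n = 1..N *)
    (forall n : nat, (1 <= n <= N)%nat -> forall Sig : R, 0 < Sig ->
       s n Sig = c n * su * sqrt (dt N) / sqrt Sig) /\
    (* alpha_n, delta_n for n = 0..N-1 as functions of Sigma_n *)
    (forall n : nat, (n <= N - 1)%nat -> forall Sig : R, 0 < Sig ->
       fst (value su N s (N - n) Sig) = b n * su * sqrt (dt N) / sqrt Sig /\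
       snd (value su N s (N - n) Sig) = a n * su * sqrt (dt N) * sqrt Sig).
Proof.
intros HN Hsu.
exists (strat N su), (fun n => Am (N - n)), (fun n => Bm (N - n)), (fun n => Cm (N - n)).
destruct (Kfacts N su HN Hsu) as [HK HK2].
assert (Hsd : 0 < sqrt (dt N)) by (apply sqrt_lt_R0; unfold dt; apply Rinv_0_lt_compat, lt_0_INR; lia).
split; [|split; [|split; [|split; [|split; [|split; [|split]]]]]].
-
  intros n Hn Sig HSig.
  set (m := (N - n)%nat).
  assert (HB := Bm_nonneg m). destruct (root_spec _ HB) as [Hc HG].
  assert (Hr : 0 < sqrt Sig) by (apply sqrt_lt_R0; auto).
  assert (Hcont : forall x, 0 < x ->
     fst (value su N (strat N su) m x) = Bm m * (su * sqrt (dt N)) / sqrt x /\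
     snd (value su N (strat N su) m x) = Am m * (su * sqrt (dt N)) * sqrt x).
  { intros x Hx. apply value_form; auto. unfold m; lia. }
  assert (Eq : forall b', onestep su N (value su N (strat N su) m) b' Sig =
     (su * sqrt (dt N) / sqrt Sig * F (Bm m) (b' * sqrt Sig / (su * sqrt (dt N))),
      su * sqrt (dt N) * sqrt Sig *
        (Am m / sqrt ((b' * sqrt Sig / (su * sqrt (dt N)))^2+1) +
         Bm m * (b' * sqrt Sig / (su * sqrt (dt N)))^2 *
           sqrt ((b' * sqrt Sig / (su * sqrt (dt N)))^2+1) /
           ((b' * sqrt Sig / (su * sqrt (dt N)))^2+1)^2))).
  { intros b'. apply onestep_form; auto. field; lra. }
  assert (Hs : strat N su n Sig * sqrt Sig / (su * sqrt (dt N)) = Cm m).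
  { unfold strat. fold m. field; repeat split; lra. }
  assert (Key : forall b', b' <> strat N su n Sig ->
     fst (onestep su N (value su N (strat N su) m) b' Sig) <
     fst (onestep su N (value su N (strat N su) m) (strat N su n Sig) Sig)).
  { intros b' Hb'. rewrite !Eq. cbn [fst]. rewrite Hs.
    apply Rmult_lt_compat_l. apply Rdiv_lt_0_compat; auto.
    apply opt; auto. intros E. apply Hb'.
    unfold strat. fold m. rewrite <- E. field; repeat split; lra. }
  split.
  + intros b'. destruct (Req_dec b' (strat N su n Sig)) as [e|e].
    * rewrite e; lra.
    * left. apply Key; auto.
  + intros b' E. destruct (Req_dec b' (strat N su n Sig)) as [e|e].
    * rewrite e; lra.
    * exfalso. specialize (Key b' e). cbv beta in E. lra.
- replace (N - (N - 1))%nat with 1%nat by lia.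
  unfold Am. cbn [AB fst snd]. ring.
- replace (N - (N - 1))%nat with 1%nat by lia.
  unfold Bm. cbn [AB fst snd]. rewrite root0. field.
- replace (N - N)%nat with 0%nat by lia. unfold Cm, Bm. cbn [AB snd]. apply root0.
- intros n Hn. replace (N - (n - 1))%nat with (S (N - n)) by lia.
  assert (HB := Bm_nonneg (N - n)). destruct (root_spec _ HB) as [Hc HG].
  split; [|split].
  + unfold Am at 1. cbn [AB fst snd]. fold (Am (N - n)) (Bm (N - n)). reflexivity.
  + unfold Bm at 1. cbn [AB fst snd]. fold (Bm (N - n)). reflexivity.
  + exact HG.
- intros n Hn. apply root_spec, Bm_nonneg.
- intros n Hn Sig HSig. reflexivity.
- intros n Hn Sig HSig.
  destruct (value_form N su HN Hsu (N - n) ltac:(lia) Sig HSig) as [E1 E2].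
  rewrite E1, E2. split; unfold Rdiv; ring.
Qed.
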